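(* Let $\alpha,\beta,\gamma\in\mathbb{R}$, and let $G_3$ be the connected, simply connected Lie group whose Lie algebra $\mathfrak{g}_3$ has a basis $\{e_1,e_2,e_3\}$ with $[e_1,e_2]=-\gamma e_3$, $[e_1,e_3]=-\beta e_2$, $[e_2,e_3]=\alpha e_1$, equipped with the left-invariant Lorentzian metric $g$ for which $\{e_1,e_2,e_3\}$ is pseudo-orthonormal with $e_3$ timelike, and with the product structure $J$. Let $\lambda_0,c\in\mathbb{R}$. Then there exists a derivation $D$ of $\mathfrak{g}_3$ with $\widetilde{\mathrm{Ric}}^0=(s^0\lambda_0+c)\mathrm{Id}+D$ (i.e. $(G_3,g,J)$ is an algebraic Schouten soliton associated to the canonical connection $\nabla^0$) if and only if one of the following holds: (i) $\alpha=\beta=\gamma=0$ (for all $c$); (ii) $\alpha=\beta=0$, $\gamma\neq0$ and $c=\gamma^2-\gamma^2\lambda_0$; (iii) ($\alpha\neq0$ or $\beta\neq0$), $\gamma=0$ and $c=0$; (iv) ($\alpha\neq0$ or $\beta\neq0$), $\gamma=\alpha+\beta$ and $c=0$.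
   Context: Pseudo-orthonormal means $g(e_1,e_1)=g(e_2,e_2)=1$, $g(e_3,e_3)=-1$, $g(e_i,e_j)=0$ for $i\neq j$; left-invariant tensors are identified with their values on $\mathfrak{g}$. $\nabla$ is the Levi-Civita connection of $g$. The product structure $J$ is the left-invariant endomorphism with $Je_1=e_1$, $Je_2=e_2$, $Je_3=-e_3$. The canonical connection is $\nabla^0_XY=\nabla_XY-\frac12(\nabla_XJ)JY$, and the Kobayashi–Nomizu connection is $\nabla^1_XY=\nabla^0_XY-\frac14[(\nabla_YJ)JX-(\nabla_{JY}J)X]$. For $k=0,1$: $R^k(X,Y)Z=\nabla^k_X\nabla^k_YZ-\nabla^k_Y\nabla^k_XZ-\nabla^k_{[X,Y]}Z$; $\rho^k(X,Y)=-g(R^k(X,e_1)Y,e_1)-g(R^k(X,e_2)Y,e_2)+g(R^k(X,e_3)Y,e_3)$; $\widetilde\rho^k(X,Y)=\frac12(\rho^k(X,Y)+\rho^k(Y,X))$; $\widetilde{\mathrm{Ric}}^k$ is defined by $\widetilde\rho^k(X,Y)=g(\widetilde{\mathrm{Ric}}^k(X),Y)$; and $s^k=\widetilde\rho^k(e_1,e_1)+\widetilde\rho^k(e_2,e_2)-\widetilde\rho^k(e_3,e_3)$. A derivation of $\mathfrak{g}$ is a linear map $D$ with $D[X,Y]=[DX,Y]+[X,DY]$. $(G,g,J)$ is an algebraic Schouten soliton associated to $\nabla^k$ (with real constants $\lambda_0,c$) if $\widetilde{\mathrm{Ric}}^k=(s^k\lambda_0+c)\mathrm{Id}+D$ for some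 derivation $D$. *)

(* Defs.v *)
(* the Lie algebra g_3 is R^3 = 'rV[R]_3, R : realType. *)
From HB Require Import structures.
From mathcomp Require Import all_boot all_order all_algebra.
From mathcomp Require Import reals.
Set Implicit Arguments. Unset Strict Implicit. Unset Printing Implicit Defensive.
Import Order.TTheory GRing.Theory Num.Theory.
Local Open Scope ring_scope.

Section G3.
Variable R : realType.
Implicit Types (u v w X Y Z : 'rV[R]_3).

Definition i1 : 'I_3 := @Ordinal 3 0 isT.
Definition i2 : 'I_3 := @Ordinal 3 1 isT.
Definition i3 : 'I_3 := @Ordinal 3 2 isT.

Definition ev (i : 'I_3) : 'rV[R]_3 := delta_mx 0 i.
Definition e1 := ev i1.
Definition e2 := ev i2.
Definition e3 := ev i3.

(* g(e_i,e_i) : +1, +1, -1 (e_3 timelike) *)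
Definition eps (i : 'I_3) : R := if (i : nat) == 2%N then -1 else 1.

Definition gm u v : R := \sum_i eps i * u 0 i * v 0 i.

(* Lie bracket on basis vectors:
   [e1,e2] = -gamma e3, [e1,e3] = -beta e2, [e2,e3] = alpha e1 *)
Definition brb (al be ga : R) (i j : 'I_3) : 'rV[R]_3 :=
  match nat_of_ord i, nat_of_ord j with
  | O, S O => - ga *: e3
  | S O, O => ga *: e3
  | O, S (S O) => - be *: e2
  | S (S O), O => be *: e2
  | S O, S (S O) => al *: e1
  | S (S O), S O => - al *: e1
  | _, _ => 0
  end.

Definition br al be ga u v : 'rV[R]_3 :=
  \sum_i \sum_j (u 0 i * v 0 j) *: brb al be ga i j.

(* Levi-Civita connection on left-invariant fields (Koszul formula):
   2 g(nabla_X Y, Z) = g([X,Y],Z) - g([Y,Z],X) + g([Z,X],Y),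
   and nabla_X Y = sum_k eps_k g(nabla_X Y, e_k) e_k. *)
Definition LC al be ga X Y : 'rV[R]_3 :=
  \sum_k (eps k * ((gm (br al be ga X Y) (ev k)
                   - gm (br al be ga Y (ev k)) X
                   + gm (br al be ga (ev k) X) Y) / 2)) *: ev k.

(* product structure J: J e1 = e1, J e2 = e2, J e3 = - e3 *)
Definition Jm v : 'rV[R]_3 := \row_i (eps i * v 0 i).

Definition nablaJ al be ga X Y : 'rV[R]_3 :=
  LC al be ga X (Jm Y) - Jm (LC al be ga X Y).

Definition nab0 al be ga X Y : 'rV[R]_3 :=
  LC al be ga X Y - (1 / 2) *: nablaJ al be ga X (Jm Y).

Definition R0 al be ga X Y Z : 'rV[R]_3 :=
  nab0 al be ga X (nab0 al be ga Y Z) - nab0 al be ga Y (nab0 al be ga X Z)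
  - nab0 al be ga (br al be ga X Y) Z.

Definition rho0 al be ga X Y : R :=
  - gm (R0 al be ga X e1 Y) e1 - gm (R0 al be ga X e2 Y) e2
  + gm (R0 al be ga X e3 Y) e3.

Definition rhot0 al be ga X Y : R := (rho0 al be ga X Y + rho0 al be ga Y X) / 2.

(* Ricci operator: the unique endomorphism with g(Ric X, Y) = rhot(X,Y) *)
Definition Ric0 al be ga X : 'rV[R]_3 :=
  \sum_k (eps k * rhot0 al be ga X (ev k)) *: ev k.

Definition s0 al be ga : R :=
  rhot0 al be ga e1 e1 + rhot0 al be ga e2 e2 - rhot0 al be ga e3 e3.

(* derivation of g_3; a linear map D is represented by a matrix, X |-> X *m D *)
Definition is_derivation al be ga (D : 'M[R]_3) : Prop :=
  forall X Y, br al be ga X Y *m D = br al be ga (X *m D) Y + br al be ga X (Y *m D).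

Definition schouten_soliton0 al be ga (l0 c : R) : Prop :=
  exists D : 'M[R]_3, is_derivation al be ga D /\
    forall X, Ric0 al be ga X = (s0 al be ga * l0 + c) *: X + X *m D.

End G3.

(* Main.v *)
Require Import Defs.
From HB Require Import structures.
From mathcomp Require Import all_boot all_order all_algebra.
From mathcomp Require Import reals ring.
Import Order.TTheory GRing.Theory Num.Theory.
Local Open Scope ring_scope.

Section S.
Variable R : realType.
Variables al be ga : R.

Definition r3 (a b c : R) : 'rV[R]_3 := \row_(i < 3) [:: a; b; c]`_i.
Notation "u `0" := (u 0 i1) (at level 2).
Notation "u `1" := (u 0 i2) (at level 2).
Notation "u `2" := (u 0 i3) (at level 2).

Lemma l1 : @lift 3 ord0 ord0 = i2. Proof. exact: val_inj. Qed.
Lemma l2 : @lift 3 ord0 (@lift 2 ord0 ord0) = i3. Proof. exact: val_inj. Qed.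
Lemma l0 : (ord0 : 'I_3) = i1. Proof. exact: val_inj. Qed.

Lemma sum3 (V : nmodType) (f : 'I_3 -> V) : \sum_i f i = f i1 + f i2 + f i3.
Proof. by rewrite !big_ord_recl big_ord0 addr0 addrA l2 l1 l0. Qed.

Lemma r3E (u : 'rV[R]_3) : u = r3 u`0 u`1 u`2.
Proof.
apply/rowP => i; rewrite mxE; case: i => [[|[|[|//]]]] Hi /=;
by rewrite (bool_irrelevance Hi isT).
Qed.

Lemma eq_r3 a b c a' b' c' : a = a' -> b = b' -> c = c' -> r3 a b c = r3 a' b' c'.
Proof. by move=> -> -> ->. Qed.

Lemma r3_0 a b c : (r3 a b c)`0 = a. Proof. by rewrite mxE. Qed.
Lemma r3_1 a b c : (r3 a b c)`1 = b. Proof. by rewrite mxE. Qed.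
Lemma r3_2 a b c : (r3 a b c)`2 = c. Proof. by rewrite mxE. Qed.

Lemma r3D a b c a' b' c' : r3 a b c + r3 a' b' c' = r3 (a+a') (b+b') (c+c').
Proof. by apply/rowP => i; rewrite !mxE; case: i => [[|[|[|//]]]] Hi. Qed.
Lemma r3N a b c : - r3 a b c = r3 (-a) (-b) (-c).
Proof. by apply/rowP => i; rewrite !mxE; case: i => [[|[|[|//]]]] Hi. Qed.
Lemma r3Z k a b c : k *: r3 a b c = r3 (k*a) (k*b) (k*c).
Proof. by apply/rowP => i; rewrite !mxE; case: i => [[|[|[|//]]]] Hi. Qed.

Lemma ev1 : ev R i1 = r3 1 0 0 :> 'rV[R]_3.
Proof. by apply/rowP => i; rewrite !mxE; case: i => [[|[|[|//]]]] Hi. Qed.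
Lemma ev2 : ev R i2 = r3 0 1 0 :> 'rV[R]_3.
Proof. by apply/rowP => i; rewrite !mxE; case: i => [[|[|[|//]]]] Hi. Qed.
Lemma ev3 : ev R i3 = r3 0 0 1 :> 'rV[R]_3.
Proof. by apply/rowP => i; rewrite !mxE; case: i => [[|[|[|//]]]] Hi. Qed.

Lemma gmE (u v : 'rV[R]_3) : gm u v = u`0 * v`0 + u`1 * v`1 - u`2 * v`2.
Proof. rewrite /gm sum3 /eps /=. ring. Qed.

Lemma JmE u : Jm u = r3 u`0 u`1 (- u`2) :> 'rV[R]_3.
Proof.
rewrite {1}[u]r3E; apply/rowP => i; rewrite !mxE /eps.
case: i => [[|[|[|//]]]] Hi /=; rewrite ?mxE /= ?mul1r ?mulN1r //.
Qed.


Ltac simp := rewrite /= /e1 /e2 /e3 ?ev1 ?ev2 ?ev3; repeat progress rewrite ?r3Z ?r3D ?r3N ?r3_0 ?r3_1 ?r3_2 ?scaler0 ?addr0 ?add0r.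

Lemma brE u v : br al be ga u v =
  r3 (al*(u`1*v`2 - u`2*v`1)) (be*(u`2*v`0 - u`0*v`2)) (-ga*(u`0*v`1 - u`1*v`0)).
Proof. rewrite /br !sum3 /brb. simp. apply: eq_r3; ring. Qed.

Lemma LCE X Y : LC al be ga X Y =
  r3 ((ga - be - al) * X`2 * Y`1 / 2 + (ga - be + al) * X`1 * Y`2 / 2)
     ((- ga + be + al) * X`2 * Y`0 / 2 + (- ga - be + al) * X`0 * Y`2 / 2)
     ((ga - be + al) * X`1 * Y`0 / 2 + (- ga - be + al) * X`0 * Y`1 / 2).
Proof. rewrite /LC sum3 /eps /= !gmE !brE. simp. apply: eq_r3; ring. Qed.

Definition hh := (ga - al - be) / 2.

Lemma nab0E X Y : nab0 al be ga X Y = r3 (hh * X`2 * Y`1) (- hh * X`2 * Y`0) 0.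
Proof. rewrite /nab0 /nablaJ !JmE !LCE ?JmE. simp. rewrite /hh. by apply: eq_r3; field. Qed.


Lemma rho0E X Y : rho0 al be ga X Y = ga * hh * (X`0 * Y`0 + X`1 * Y`1).
Proof. rewrite /rho0 /R0 !nab0E !brE !gmE. simp. rewrite /hh. by field. Qed.

Lemma Ric0E X : Ric0 al be ga X = r3 (ga * hh * X`0) (ga * hh * X`1) 0.
Proof. rewrite /Ric0 /rhot0 sum3 /eps /= !rho0E. simp. by apply: eq_r3; field. Qed.

Lemma s0E : s0 al be ga = 2 * (ga * hh).
Proof. rewrite /s0 /rhot0 !rho0E. simp. by field. Qed.


Lemma hz1 (a x A B : R) : A = B -> a * x = A - B -> a * x = 0.
Proof. by move=> -> ->; rewrite subrr. Qed.
Lemma hz2 (a x A B : R) : A = B -> a * x = B - A -> a * x = 0.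
Proof. by move=> -> ->; rewrite subrr. Qed.
Lemma hz (a x A B t : R) : a * x = 0 -> A - B = a * x * t -> A = B.
Proof. by move=> H1 H2; apply/eqP; rewrite -subr_eq0 H2 H1 mul0r. Qed.

Ltac hzt E := first [ (eapply hz1; first exact E; ring) | (eapply hz2; first exact E; ring) ].

Lemma derivE (D : 'M[R]_3) d1 d2 d3 :
  (forall X, X *m D = r3 (d1 * X`0) (d2 * X`1) (d3 * X`2)) ->
  is_derivation al be ga D <->
  [/\ al * (d1 - d2 - d3) = 0, be * (d2 - d1 - d3) = 0 & ga * (d3 - d1 - d2) = 0].
Proof.
move=> HD; split.
  move=> H.
  have H23 := congr1 (fun v : 'rV[R]_3 => v 0 i1) (H (ev R i2) (ev R i3)).
  have H13 := congr1 (fun v : 'rV[R]_3 => v 0 i2) (H (ev R i1) (ev R i3)).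
  have H12 := congr1 (fun v : 'rV[R]_3 => v 0 i3) (H (ev R i1) (ev R i2)).
  move: H23 H13 H12; rewrite !HD !brE; simp.
  move=> E1 E2 E3; split; [hzt E1 | hzt E2 | hzt E3].
case=> E1 E2 E3 X Y.
rewrite !brE !HD ?brE; simp; apply: eq_r3.
- by apply: (@hz _ _ _ _ (X`1 * Y`2 - X`2 * Y`1) E1); ring.
- by apply: (@hz _ _ _ _ (X`2 * Y`0 - X`0 * Y`2) E2); ring.
- by apply: (@hz _ _ _ _ (X`1 * Y`0 - X`0 * Y`1) E3); ring.
Qed.


Lemma mulD (X : 'rV[R]_3) d1 d2 d3 :
  X *m diag_mx (r3 d1 d2 d3) = r3 (d1 * X`0) (d2 * X`1) (d3 * X`2).
Proof.
rewrite mul_mx_diag {1}[X]r3E; apply/rowP => i; rewrite !mxE.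
by case: i => [[|[|[|//]]]] Hi /=; rewrite mulrC.
Qed.

Lemma sol_iff l0 c : schouten_soliton0 al be ga l0 c <->
  (let k := ga * hh in let m := 2 * k * l0 + c in
  [/\ al * ((k - m) - (k - m) - (- m)) = 0, be * ((k - m) - (k - m) - (- m)) = 0
    & ga * ((- m) - (k - m) - (k - m)) = 0]).
Proof.
rewrite /=; set k := ga * hh; set m := 2 * k * l0 + c; split.
  case=> D [Hder]; rewrite s0E -/k -/m => HD.
  have HD' : forall X, X *m D = r3 ((k - m) * X`0) ((k - m) * X`1) ((- m) * X`2).
    move=> X; rewrite -[X *m D](addKr (m *: X)) -HD Ric0E [X in - (_ *: X)]r3E.
    simp; rewrite /m /k; apply: eq_r3; ring.
  exact/(derivE _ _ _ _ HD').
move=> H; exists (diag_mx (r3 (k - m) (k - m) (- m))); split.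
  by apply/(derivE _ _ _ _ (fun X => mulD X _ _ _)).
move=> X; rewrite s0E -/k -/m mulD Ric0E [X in _ *: X]r3E; simp; rewrite /m /k; apply: eq_r3; ring.
Qed.


Lemma prod0 (x y : R) : x * y = 0 -> x = 0 \/ y = 0.
Proof. by move/eqP; rewrite mulf_eq0 => /orP[/eqP|/eqP]; [left|right]. Qed.
Arguments prod0 {x y}.

Lemma alg (l0 c : R) : let M := ga * (ga - al - be) * l0 + c in
 (al * M = 0 /\ be * M = 0 /\ ga * (M - ga * (ga - al - be)) = 0) <->
  [\/ (al = 0 /\ be = 0 /\ ga = 0),
      (al = 0 /\ be = 0 /\ ga <> 0 /\ c = ga ^+ 2 - ga ^+ 2 * l0),
      ((al <> 0 \/ be <> 0) /\ ga = 0 /\ c = 0)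
    | ((al <> 0 \/ be <> 0) /\ ga = al + be /\ c = 0)].
Proof.
move=> M; split.
  case=> A [B C].
  have [Hab|Hab] := boolP ((al == 0) && (be == 0)).
    move/andP: Hab => [/eqP Ha /eqP Hb].
    have [Hg|Hg] := eqVneq ga 0; first by constructor 1.
    constructor 2; do 3! split => //; first by apply/eqP.
    move: C; rewrite /M Ha Hb => /prod0 [/eqP|]; first by rewrite (negPf Hg).
    move=> E; apply/eqP; rewrite -subr_eq0; apply/eqP; rewrite -E; ring.
  have Hn : al <> 0 \/ be <> 0.
    by move: Hab; rewrite negb_and => /orP[/eqP|/eqP]; [left|right].
  have HM : M = 0.
    by case: Hn => H; [case: (prod0 A) => // /H [] | case: (prod0 B) => // /H []].
  move: C; rewrite HM sub0r mulrN => /eqP; rewrite oppr_eq0 mulf_eq0 => /orP[/eqP Hg|].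
    constructor 3; split => //; split => //.
    by move: HM; rewrite /M Hg !mul0r add0r.
  rewrite mulf_eq0 => /orP[/eqP Hg|/eqP E].
    constructor 3; split => //; split => //.
    by move: HM; rewrite /M Hg !mul0r add0r.
  constructor 4; split => //; split.
    by apply/eqP; rewrite -subr_eq0 opprD addrA E.
  by move: HM; rewrite /M E mulr0 mul0r add0r.
case.
- by case=> Ha [Hb Hg]; rewrite /M Ha Hb Hg; split; [ring|split; ring].
- by case=> Ha [Hb [_ Hc]]; rewrite /M Ha Hb Hc; split; [ring|split; ring].
- by case=> _ [Hg Hc]; rewrite /M Hg Hc; split; [ring|split; ring].
- by case=> _ [Hg Hc]; rewrite /M Hg Hc; split; [ring|split; ring].
Qed.

End S.

Theorem theorem4p6 (R : realType) (al be ga l0 c : R) :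
  schouten_soliton0 al be ga l0 c <->
  [\/ (al = 0 /\ be = 0 /\ ga = 0),
      (al = 0 /\ be = 0 /\ ga <> 0 /\ c = ga ^+ 2 - ga ^+ 2 * l0),
      ((al <> 0 \/ be <> 0) /\ ga = 0 /\ c = 0)
    | ((al <> 0 \/ be <> 0) /\ ga = al + be /\ c = 0)].
Proof.
rewrite sol_iff -alg /= /hh.
split => [[A B C] | [A [B C]]].
- split; first by apply: (etrans _ A); field.
  split; first by apply: (etrans _ B); field.
  by apply: (etrans _ C); field.
- split; first by apply: (etrans _ A); field.
  by apply: (etrans _ B); field.
  by apply: (etrans _ C); field.
Qed.
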